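(* Let $0\le k<d$ and let $L(X)\in\mathbb F_{q^2}[X]$ satisfy $L(0)\neq0$, $\deg L=t<(q+1)/d$, and $L$ has no root in $A_k$. (i) If there exist an integer $0\le\tau<(q+1)/d$ and $\lambda\in\mu_{q+1}$ such that $\tilde L(x)/L(x)=\lambda x^\tau$ for all $x\in A_k$, then either $\tau=0$ or $(q+1)/d-t\le\tau\le t$. (ii) For $\lambda\in\mu_{q+1}$: $\tilde L(x)/L(x)=\lambda$ for all $x\in A_k$ if and only if $\tilde L(X)=\lambda L(X)$. (iii) For $\lambda\in\mu_{q+1}$ and an integer $\tau$ with $(q+1)/d-t\le\tau\le t$: $\tilde L(x)/L(x)=\lambda x^\tau$ for all $x\in A_k$ if and only if $L(X)=P(X)+X^{(q+1)/d-\tau}Q(X)$ for some $P,Q\in\mathbb F_{q^2}[X]$ with $\deg P=t-\tau$, $\tilde P=\lambda P$, $\deg Q=\tau+t-(q+1)/d$ and $\tilde Q=\lambda\epsilon^kQ$.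
   Context: $q$ is a prime power, $d$ is a positive divisor of $q+1$, and $\epsilon\in\mathbb F_{q^2}^*$ has multiplicative order $d$. $\mu_m$ denotes the subgroup of order $m$ of $\mathbb F_{q^2}^*$. For $0\le k<d$, $A_k=\{x\in\mu_{q+1}: x^{(q+1)/d}=\epsilon^k\}$. For $a\in\mathbb F_{q^2}$, $\bar a=a^q$. For $f(X)=\sum_{i=0}^n a_iX^i\in\mathbb F_{q^2}[X]$ with $a_n\neq0$, $\bar f(X)=\sum_{i=0}^n\bar a_iX^i$ and $\tilde f(X)=X^n\bar f(X^{-1})=\sum_{i=0}^n\bar a_iX^{n-i}$. *)

(* Defs.v *)
From HB Require Import structures.
From mathcomp Require Import all_boot all_order all_algebra all_field.
Set Implicit Arguments. Unset Strict Implicit. Unset Printing Implicit Defensive.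
Import GRing.Theory.
Local Open Scope ring_scope.

Definition prime_power (q : nat) : Prop :=
  exists p m : nat, [/\ prime p, (0 < m)%N & q = (p ^ m)%N].

Definition polybar (F : finFieldType) (q : nat) (f : {poly F}) : {poly F} :=
  map_poly (fun a => a ^+ q) f.

(* \tilde f = X^n \bar f(X^{-1}) = sum_{i=0}^n \bar a_i X^{n-i}, n = deg f *)
Definition polytilde (F : finFieldType) (q : nat) (f : {poly F}) : {poly F} :=
  \sum_(i < size f) ((f`_i) ^+ q) *: 'X^((size f).-1 - i).

Definition Aset (F : finFieldType) (q d : nat) (eps : F) (k : nat) : {set F} :=
  [set x : F | (x ^+ q.+1 == 1) && (x ^+ (q.+1 %/ d) == eps ^+ k)].

(* Main.v *)
Require Import Defs.
From HB Require Import structures.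
From mathcomp Require Import all_boot all_order all_algebra all_field.
From mathcomp Require Import zify ring.
Import GRing.Theory.
Local Open Scope ring_scope.

Lemma Azero (F : finFieldType) (q : nat) (hF : #|F| = (q ^ 2)%N) (d : nat)
  (hd0 : (0 < d)%N) (hd : (d %| q.+1)%N) (eps : F) (heps : d.-primitive_root eps)
  (k : nat) (R : {poly F}) (hR : (size R <= q.+1 %/ d)%N)
  (hz : forall x, x \in Aset q d eps k -> R.[x] = 0) : R = 0.
Proof.
set m := (q.+1 %/ d)%N.
have hmd : (m * d)%N = q.+1 by rewrite divnK.
have epsd : eps ^+ d = 1 := prim_expr_order heps.
have q0 : (0 < q)%N.
  have : (0 < #|F|)%N by apply/card_gt0P; exists 0.
  by rewrite hF; case: q {hF hmd hd m hR hz}.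
set c := eps ^+ k.
set p : {poly F} := 'X^m - c%:P.
have hdiv : p %| \prod_(x <- enum F) ('X - x%:P).
  rewrite big_enum /= -finField_genPoly hF.
  have -> : (q ^ 2)%N = (m * (d * q.-1)).+1.
    rewrite mulnA hmd; case: q q0 {hF hmd hd m hR hz p c} => // q' _ /=.
    rewrite expnS; lia.
  rewrite exprS -[X in _ - X]mulr1 -mulrBr; apply: dvdp_mull.
  have -> : (1 : {poly F}) = (c%:P) ^+ (d * q.-1).
    by rewrite -polyC_exp /c -exprM mulnC -mulnA exprM epsd expr1n.
  by rewrite exprM subrXX dvdp_mulr.
have [msk hmsk] := dvdp_prod_XsubC hdiv.
set s := mask msk (enum F) in hmsk.
have sizep : size p = m.+1.
  rewrite /p size_XnsubC // lt0n; apply/eqP => m0; move: hmd; rewrite m0 //.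
have szs : size s = m.
  by have := eqp_size hmsk; rewrite size_prod_XsubC sizep => -[].
have us : uniq s by rewrite mask_uniq ?enum_uniq.
apply: (roots_geq_poly_eq0 (rs := s)) => //; last by rewrite szs.
apply/allP => x xs; rewrite /root; apply/eqP/hz.
have rx : root p x.
  rewrite (eqp_root hmsk) root_prod_XsubC; exact: xs.
move: rx; rewrite /root /p !hornerE subr_eq0 => /eqP hx.
rewrite inE -/m hx eqxx andbT -hmd exprM hx /c -exprM mulnC exprM epsd.
by rewrite expr1n.
Qed.

Lemma coef_tilde (F : finFieldType) (q : nat) (f : {poly F}) j :
  (polytilde q f)`_j = if (j < size f)%N then (f`_((size f).-1 - j)) ^+ q else 0.
Proof.
rewrite /polytilde coef_sum.
under eq_bigr => i _ do rewrite coefZ coefXn.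
case: (ltnP j (size f)) => hj.
  have hi : ((size f).-1 - j < size f)%N by lia.
  rewrite (bigD1 (Ordinal hi)) //= big1 ?addr0.
    have -> : (j == (size f).-1 - ((size f).-1 - j))%N.
      apply/eqP; lia.
    by rewrite mulr1.
  move=> i /eqP hne; case: eqP => [he|]; last by rewrite mulr0.
  exfalso; apply: hne; apply: val_inj => /=; move: (ltn_ord i) he.
  lia.
rewrite big1 // => i _; case: eqP => [he|]; last by rewrite mulr0.
by exfalso; move: (ltn_ord i) he hj; lia.
Qed.

Lemma size_tilde (F : finFieldType) (q : nat) (f : {poly F}) :
  (size (polytilde q f) <= size f)%N.
Proof. by apply/leq_sizeP => j hj; rewrite coef_tilde ltnNge hj. Qed.

Lemma key (F : finFieldType) (q : nat) (hF : #|F| = (q ^ 2)%N) (d : nat)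
  (hd0 : (0 < d)%N) (hd : (d %| q.+1)%N) (eps : F) (heps : d.-primitive_root eps)
  (k : nat) (L : {poly F}) (t : nat) (hdeg : size L = t.+1)
  (ht : (t < q.+1 %/ d)%N)
  (hroot : forall x, x \in Aset q d eps k -> L.[x] != 0)
  (tau : nat) (lam : F) (htau : (tau < q.+1 %/ d)%N) :
  (forall x, x \in Aset q d eps k ->
        (polytilde q L).[x] / L.[x] = lam * x ^+ tau) <->
  polytilde q L = lam *: ('X^tau * take_poly (q.+1 %/ d - tau) L
                          + eps ^+ k *: drop_poly (q.+1 %/ d - tau) L).
Proof.
set m := (q.+1 %/ d)%N in ht htau *.
set RHS := lam *: _.
have evR : forall x, x \in Aset q d eps k -> RHS.[x] = lam * x ^+ tau * L.[x].
  move=> x; rewrite inE => /andP[_ /eqP hx].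
  transitivity (lam * x ^+ tau * (take_poly (m - tau) L
     + drop_poly (m - tau) L * 'X^(m - tau)).[x]); last by rewrite poly_take_drop.
  rewrite /RHS !hornerE -hx -/m.
  rewrite (_ : x ^+ m = x ^+ tau * x ^+ (m - tau)); last first.
    by rewrite -exprD subnKC // ltnW.
  ring.
split=> [H|H x xA]; last first.
  by rewrite H evR // mulfK // hroot.
apply/eqP; rewrite -subr_eq0; apply/eqP.
apply: (@Azero F q hF d hd0 hd eps heps k).
  apply: (leq_trans (size_polyD _ _)); rewrite geq_max; apply/andP; split.
    by apply: (leq_trans (size_tilde _ _ _)); rewrite hdeg.
  rewrite size_polyN /RHS; apply: (leq_trans (size_scale_leq _ _)).
  apply: (leq_trans (size_polyD _ _)); rewrite geq_max; apply/andP; split.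
    apply: (leq_trans (size_polyMleq _ _)); rewrite size_polyXn.
    have := size_take_poly (m - tau) L; rewrite -/m; move: htau; clearbody m; move: (size _) => s; clear; lia.
  apply: (leq_trans (size_scale_leq _ _)); rewrite size_drop_poly hdeg -/m; move: htau ht; clearbody m; clear; lia.
move=> x xA; rewrite hornerD hornerN evR // -(H x xA) divfK ?subrr //.
exact: hroot.
Qed.

Lemma frobD (F : finFieldType) (q : nat) (hq : prime_power q)
  (hF : #|F| = (q ^ 2)%N) (a b : F) : (a + b) ^+ q = a ^+ q + b ^+ q.
Proof.
case: hq => p [e [pp e0 qe]].
have pc : p \in [pchar F].
  by apply: (@card_finPcharP F p (e * 2)) => //; rewrite hF qe expnM.
apply: exprDn_pchar; rewrite qe pnatX (pnatE _ pp) pc //.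
Qed.

Lemma q_gt0 (F : finFieldType) (q : nat) (hF : #|F| = (q ^ 2)%N) : (0 < q)%N.
Proof.
have : (0 < #|F|)%N by apply/card_gt0P; exists 0.
by rewrite hF; case: q {hF}.
Qed.

Theorem lemma2p1 (F : finFieldType) (q : nat) (hq : prime_power q)
  (hF : #|F| = (q ^ 2)%N) (d : nat) (hd0 : (0 < d)%N) (hd : (d %| q.+1)%N)
  (eps : F) (heps : d.-primitive_root eps) (k : nat) (hk : (k < d)%N)
  (L : {poly F}) (t : nat) (hL0 : L.[0] != 0) (hdeg : size L = t.+1)
  (ht : (t < q.+1 %/ d)%N)
  (hroot : forall x, x \in Aset q d eps k -> L.[x] != 0) :
  (* (i) *)
  (forall (tau : nat) (lam : F), (tau < q.+1 %/ d)%N -> lam ^+ q.+1 = 1 ->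
     (forall x, x \in Aset q d eps k ->
        (polytilde q L).[x] / L.[x] = lam * x ^+ tau) ->
     tau = 0%N \/ (q.+1 %/ d - t <= tau <= t)%N)
  /\
  (* (ii) *)
  (forall lam : F, lam ^+ q.+1 = 1 ->
     ((forall x, x \in Aset q d eps k -> (polytilde q L).[x] / L.[x] = lam)
      <-> polytilde q L = lam *: L))
  /\
  (* (iii) *)
  (forall (lam : F) (tau : nat), lam ^+ q.+1 = 1 ->
     (q.+1 %/ d - t <= tau <= t)%N ->
     ((forall x, x \in Aset q d eps k ->
         (polytilde q L).[x] / L.[x] = lam * x ^+ tau)
      <->
      exists P Q : {poly F},
        [/\ L = P + 'X^(q.+1 %/ d - tau) * Q,
            size P = (t - tau).+1,
            polytilde q P = lam *: P,
            size Q = (tau + t - q.+1 %/ d).+1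
          & polytilde q Q = (lam * eps ^+ k) *: Q])).
Proof.
have qpos := @q_gt0 F q hF.
have z0 : (0 : F) ^+ q = 0 by rewrite expr0n; case: q qpos {hq hF hd ht hroot}.
have hA : forall x, x \in Aset q d eps k -> x ^+ (q.+1 %/ d) = eps ^+ k.
  by move=> x; rewrite inE => /andP[_ /eqP].
have K := @key F q hF d hd0 hd eps heps k L t hdeg ht hroot.
have lamnz : forall lam : F, lam ^+ q.+1 = 1 -> lam != 0.
  move=> lam h; apply/eqP => l0; move: h; rewrite l0 expr0n /= => /eqP.
  by rewrite eq_sym oner_eq0.
have Lt : L`_t != 0.
  by rewrite -[t]/(t.+1.-1) -hdeg -lead_coefE lead_coef_eq0 -size_poly_eq0 hdeg.
have L0 : L`_0 != 0 by rewrite -horner_coef0.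
have Lbig : forall i, (t < i)%N -> L`_i = 0.
  by move=> i hi; apply: nth_default; rewrite hdeg.
have ctL : forall j, (polytilde q L)`_j = if (j < t.+1)%N then (L`_(t - j))^+q else 0.
  by move=> j; rewrite coef_tilde hdeg.
have FD := @frobD F q hq hF.
move: K hA ht; move: (q.+1 %/ d)%N => m K hA ht.
clear hd heps hk.
split; [|split].
- move=> tau lam htau hlam /(K tau lam htau) E.
  have cE j : (polytilde q L)`_j = lam * (('X^tau * take_poly (m - tau) L)`_j
      + eps ^+ k * (drop_poly (m - tau) L)`_j).
    by rewrite E coefZ coefD coefZ.
  have ttau : (tau <= t)%N.
    rewrite leqNgt; apply/negP => tl; have := cE tau.
    rewrite ctL coefXnM ltnn subnn coef_take_poly coef_drop_poly.
    rewrite (_ : (tau < t.+1)%N = false); last by rewrite ltnS leqNgt tl.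
    rewrite subn_gt0 htau (Lbig (tau + (m - tau))%N) ?mulr0 ?addr0; last by move: htau ht; clear; lia.
    move=> /esym /eqP; rewrite mulf_eq0 (negbTE (lamnz _ hlam)) (negbTE L0).
    done.
  case: (posnP tau) => [->|tpos]; [by left|right]; rewrite ttau andbT.
  have := cE 0%N; rewrite ctL coefXnM tpos /= add0r coef_drop_poly add0n subn0.
  move=> h; rewrite leqNgt; apply/negP => hlt.
  move: h; rewrite Lbig; last by move: hlt htau; clear; lia.
  by rewrite !mulr0 => /eqP; rewrite expf_eq0 (negbTE Lt) andbF.
- move=> lam hlam; have m0 : (0 < m)%N by move: ht; clear; lia.
  have := K 0%N lam m0.
  rewrite subn0 expr0 mul1r take_poly_id ?hdeg // drop_poly_eq0 ?hdeg //.
  rewrite scaler0 addr0 => <-; split=> h x xA; by move: (h x xA); rewrite expr0 mulr1.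
- move=> lam tau hlam /andP[h1 h2].
  have htau : (tau < m)%N by move: h2 ht; clear; lia.
  have lnz := lamnz _ hlam.
  split.
  + move=> /(K tau lam htau) E.
    have cE j : (polytilde q L)`_j = lam * (('X^tau * take_poly (m - tau) L)`_j
        + eps ^+ k * (drop_poly (m - tau) L)`_j).
      by rewrite E coefZ coefD coefZ.
    set P := take_poly (m - tau) L in cE *.
    set Q := drop_poly (m - tau) L in cE *.
    have T i : lam * P`_i = if (i + tau < t.+1)%N then (L`_(t - (i + tau)))^+q else 0.
      have := cE (i + tau)%N; rewrite ctL coefXnM (_ : (i + tau < tau)%N = false); last first.
        by rewrite ltnNge leq_addl.
      rewrite addnK.
      rewrite /Q coef_drop_poly (Lbig (i + tau + (m - tau))%N) ?mulr0 ?addr0 //.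
      by move: htau ht; clear; lia.
    have Pbig i : (t - tau < i)%N -> P`_i = 0.
      move=> hi; move: (T i); rewrite (_ : (i + tau < t.+1)%N = false); last first.
        by apply/negbTE; rewrite -leqNgt; move: hi h2; clear; lia.
      by move/eqP; rewrite mulf_eq0 (negbTE lnz) => /eqP.
    have sP : size P = (t - tau).+1.
      apply/eqP; rewrite eqn_leq; apply/andP; split.
        by apply/leq_sizeP => j hj; apply: Pbig.
      rewrite ltnNge; apply/negP => /leq_sizeP /(_ (t - tau)%N (leqnn _)) hp.
      move: (T (t - tau)%N); rewrite hp mulr0 (subnK h2) ltnSn subnn.
      by move=> /esym/eqP; rewrite expf_eq0 qpos (negbTE L0).
    have sQ : size Q = (tau + t - m).+1.
      by rewrite /Q size_drop_poly hdeg; move: h1 ht htau; clear; lia.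
    exists P, Q; split => //.
    * by rewrite mulrC poly_take_drop.
    * apply/polyP => j; rewrite coef_tilde sP coefZ succnK.
      case: (ltnP j (t - tau).+1) => hj; last first.
        by rewrite Pbig ?mulr0.
      rewrite (T j) (_ : (j + tau < t.+1)%N); last by move: hj h2; clear; lia.
      rewrite /P coef_take_poly (_ : (t - tau - j < m - tau)%N); last first.
        by move: ht h2; clear; lia.
      by congr (L`_ _ ^+ q); move: hj h2; clear; lia.
    * apply/polyP => j; rewrite coef_tilde sQ coefZ succnK.
      case: (ltnP j (tau + t - m).+1) => hj; last first.
        by rewrite nth_default ?mulr0 // sQ.
      move: (cE j); rewrite ctL coefXnM.
      rewrite (_ : (j < t.+1)%N); last by move: hj ht htau h1; clear; lia.
      rewrite (_ : (j < tau)%N); last by move: hj ht htau h1; clear; lia.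
      rewrite add0r mulrA => <-; rewrite /Q coef_drop_poly.
      by congr (L`_ _ ^+ q); move: hj h1 h2 ht; clear; lia.
  + move=> [P [Q [eL sP tP sQ tQ]]] x xA.
    have tL : polytilde q L = 'X^tau * polytilde q P + polytilde q Q.
      apply/polyP => j; rewrite coefD coefXnM !coef_tilde sP sQ hdeg !succnK.
      rewrite [in L`_ _]eL coefD coefXnM.
      case: (ltnP j t.+1) => h3; last first.
        rewrite (_ : (j - tau < (t - tau).+1)%N = false); last first.
          by apply/negbTE; rewrite -leqNgt; move: h3 h2 h1 ht htau; clear; lia.
        rewrite (_ : (j < (tau + t - m).+1)%N = false); last first.
          by apply/negbTE; rewrite -leqNgt; move: h3 h2 ht h1 htau; clear; lia.
        by rewrite addr0; case: ifP.
      case: (ltnP j tau) => h4.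
        rewrite add0r (nth_default _ (_ : size P <= t - j)%N); last first.
          by rewrite sP; move: h4 h3 h1 h2 ht htau; clear; lia.
        rewrite add0r.
        case: (ltnP (t - j) (m - tau)) => h5.
          rewrite (_ : (j < (tau + t - m).+1)%N = false) //.
          by apply/negbTE; rewrite -leqNgt; move: h5 h3 ht h1 h2 htau; clear; lia.
        rewrite (_ : (j < (tau + t - m).+1)%N); last first.
          by move: h5 h3 ht h1 h2 htau; clear; lia.
        by congr (Q`_ _ ^+ q); move: h5 h3 ht h1 h2 htau; clear; lia.
      rewrite (_ : (j - tau < (t - tau).+1)%N); last by move: h3 h4 h1 h2 ht htau; clear; lia.
      rewrite (_ : (j < (tau + t - m).+1)%N = false); last first.
        by apply/negbTE; rewrite -leqNgt; move: h4 ht h1 h2 htau; clear; lia.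
      rewrite (_ : (t - j < m - tau)%N); last by move: h4 ht h1 h3 h2 htau; clear; lia.
      rewrite !addr0.
      by congr (P`_ _ ^+ q); move: h4 h3 h1 h2 ht htau; clear; lia.
    have ev : ('X^tau * (lam *: P) + (lam * eps ^+ k) *: Q).[x]
              = lam * x ^+ tau * L.[x].
      rewrite eL !(hornerD, hornerM, hornerZ, hornerXn) -(hA x xA).
      rewrite (_ : x ^+ m = x ^+ tau * x ^+ (m - tau)); last first.
        by rewrite -exprD subnKC // ltnW.
      ring.
    by rewrite tL tP tQ ev mulfK // hroot.
Qed.
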